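(* Let $(R_1,d_1)$, $(R_2,d_2)$ be finitely generated fusion algebras and $(R,d)$ their product fusion algebra. Then $\omega(R,d)=\max(\omega(R_1,d_1),\omega(R_2,d_2))$.
   Context: A fusion algebra $(R,d)$ consists of a set $I$ with distinguished $e$ and involution $\alpha\mapsto\bar\alpha$, a unital ring structure on $R=\mathbb{Z}[I]$ with unit $e$ and $\xi\eta=\sum_\alpha N^\alpha_{\xi,\eta}\alpha$, $N^\alpha_{\xi,\eta}\in\mathbb{Z}_{\ge0}$ finitely many nonzero, the involution extending to a $\mathbb{Z}$-linear antimultiplicative involution, Frobenius reciprocity $N^\alpha_{\xi,\eta}=N^\xi_{\alpha,\bar\eta}=N^\eta_{\bar\xi,\alpha}$, and $\mathbb{Z}$-linear multiplicative $d:R\to\mathbb{R}$ with $d(\bar\alpha)=d(\alpha)\ge1$ on $I$. $|A|=\sum_{\alpha\in A}d(\alpha)^2$. A finite generating set is a finite $X\subseteq I$, $\bar X=X$, such that every $\alpha\in I$ has nonzero coefficient in some $x_1\cdots x_n$, $x_i\in X$; finitely generated means such $X$ exists. $\ell_X(e)=0$, otherwise $\ell_X(\alpha)$ is the least such $n\ge1$; $B_X(n)=\{\alpha:\ell_X(\alpha)\le n\}$; $\omega_X=\lim_n|B_X(n)|^{1/n}$ (exists), $\omega=\inf_X\omega_X$ over finite generating sets. The product fusion algebra of $(R_i,d_i)$ with irreducibles $I_i$ is $R=R_1\otimes_{\mathbb{Z}}R_2$ with irreducibles $I=I_1\times I_2$ (elements written $\alpha\boxtimes\beta$), unit $e_1\boxtimes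 e_2$, involution $\overline{\alpha\boxtimes\beta}=\bar\alpha\boxtimes\bar\beta$, structure constants $N^{\alpha\boxtimes\alpha'}_{\xi\boxtimes\xi',\eta\boxtimes\eta'}=N^\alpha_{\xi,\eta}N^{\alpha'}_{\xi',\eta'}$ and dimension $d(\alpha\boxtimes\beta)=d_1(\alpha)d_2(\beta)$. *)

(* Defs.v *)
From HB Require Import structures.
From mathcomp Require Import all_boot all_order all_algebra.
From mathcomp Require Import all_classical all_reals all_analysis.
From mathcomp Require Import Rstruct.
Set Implicit Arguments. Unset Strict Implicit. Unset Printing Implicit Defensive.
Import Order.TTheory GRing.Theory Num.Theory.
Local Open Scope classical_set_scope.
Local Open Scope ring_scope.

(** Raw data of a fusion algebra (R = Z[I], d).  [fa_N a x y] is the structure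
    constant N^a_{x,y}, i.e. x*y = sum_a N^a_{x,y} a. *)
Record fusion_data := FusionData {
  fa_I : choiceType;
  fa_e : fa_I;
  fa_bar : fa_I -> fa_I;
  fa_N : fa_I -> fa_I -> fa_I -> nat;
  fa_d : fa_I -> Rdefinitions.R;
}.

Section FusionDefs.
Variable A : fusion_data.
Local Notation I := (fa_I A).
Local Notation e := (@fa_e A).
Local Notation bar := (@fa_bar A).
Local Notation N := (@fa_N A).
Local Notation d := (@fa_d A).

Definition nsum (F : I -> nat) : nat := (\sum_(b \in [set: I]) F b)%R.

Definition is_fusion_algebra : Prop :=
  (forall a, bar (bar a) = a) /\
  (forall x y, finite_set [set a | N a x y != 0%N]) /\
  (forall x a, N a e x = (a == x) :> nat /\ N a x e = (a == x) :> nat) /\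
  (* associativity of the multiplication on Z[I]: (xy)z = x(yz) *)
  (forall x y z a,
      nsum (fun b => N b x y * N a b z)%N = nsum (fun b => N b y z * N a x b)%N) /\
  (* the involution extends to an antimultiplicative map: bar(xy) = bar y bar x *)
  (forall a x y, N (bar a) (bar y) (bar x) = N a x y) /\
  (forall a x y, N a x y = N x a (bar y) /\ N a x y = N y (bar x) a) /\
  (* d is (the restriction to I of) a Z-linear multiplicative map *)
  (forall x y, d x * d y = \sum_(a \in [set: I]) (N a x y)%:R * d a) /\
  (forall a, d (bar a) = d a) /\
  (forall a, 1 <= d a).

(** Coefficient of a in the product x_1 * (x_2 * ( ... * x_n)) (empty product = e). *)
Fixpoint prod_coef (xs : seq I) (a : I) : nat :=
  match xs with
  | [::] => (a == e)
  | x :: xs' => nsum (fun b => N a x b * prod_coef xs' b)%N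
  end.

Definition is_gen_set (X : set I) : Prop :=
  [/\ finite_set X, bar @` X = X &
      forall a, exists xs : seq I,
        [/\ (0 < size xs)%N, (forall x, x \in xs -> X x) & prod_coef xs a != 0%N]].

Definition finitely_generated : Prop := exists X, is_gen_set X.

(** Ball B_X(n) = {a | l_X(a) <= n}, with l_X(e) = 0. *)
Definition ball (X : set I) (n : nat) : set I :=
  [set a | a = e \/ exists xs : seq I,
     [/\ (0 < size xs <= n)%N, (forall x, x \in xs -> X x) & prod_coef xs a != 0%N]].

Definition dmass (S : set I) : Rdefinitions.R := \sum_(a \in S) d a ^+ 2.

Definition omega_X (X : set I) : Rdefinitions.R :=
  limn (fun n : nat => powR (dmass (ball X n)) (n%:R)^-1).

Definition omega : Rdefinitions.R := inf [set omega_X X | X in is_gen_set].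

End FusionDefs.

Definition product_fusion (A1 A2 : fusion_data) : fusion_data :=
  @FusionData (fa_I A1 * fa_I A2)%type
    (@fa_e A1, @fa_e A2)
    (fun p => (@fa_bar A1 p.1, @fa_bar A2 p.2))
    (fun a x y => (@fa_N A1 a.1 x.1 y.1 * @fa_N A2 a.2 x.2 y.2)%N)
    (fun p => @fa_d A1 p.1 * @fa_d A2 p.2).

(* Main.v *)
Require Import Defs.
From HB Require Import structures.
From mathcomp Require Import all_boot all_order all_algebra.
From mathcomp Require Import all_classical all_reals all_analysis.
From mathcomp Require Import Rstruct.
From mathcomp Require Import lra zify.
Import Order.TTheory GRing.Theory Num.Theory.
Set Implicit Arguments. Unset Strict Implicit. Unset Printing Implicit Defensive.
Local Open Scope classical_set_scope.
Local Open Scope ring_scope.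
Section G.
Variable A : fusion_data.
Local Notation I := (fa_I A).
Local Notation e := (@fa_e A).
Local Notation N := (@fa_N A).
Local Notation d := (@fa_d A).
Local Notation pc := (@prod_coef A).

Lemma nsum_neq0 (F : I -> nat) : nsum F != 0%N -> exists b, F b != 0%N.
Proof. by move=> H; have [b _ Hb] := @fsbigN1 _ _ _ unit _ _ (fun _ => F) tt H; exists b. Qed.

Lemma nsum_neq0' (F : I -> nat) b :
  finite_set [set b | F b != 0%N] -> F b != 0%N -> nsum F != 0%N.
Proof.
move=> fin Fb; rewrite /nsum fsbig_supp (fsbigD1 b) //=.
- by rewrite addn_eq0 negb_and Fb.
- rewrite setTI; apply: sub_finite_set fin => x /= /eqP; done.
- by split => //; apply/eqP.
Qed.

Definition WF : Prop :=
 [/\ (forall x y, finite_set [set a | N a x y != 0%N]),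
     (forall a b, (N a e b != 0%N) = (a == b)),
     (forall a x b' b c, N a x b' != 0%N -> N b' b c != 0%N ->
         exists b'', N b'' x b != 0%N /\ N a b'' c != 0%N),
     (forall b c, \sum_(a \in [set a | N a b c != 0%N]) d a ^+ 2 <= (d b * d c) ^+ 2) &
     (forall a, 1 <= d a) /\ (forall x y, exists a, N a x y != 0%N)].

Hypothesis wf : WF.

Lemma wf_fin x y : finite_set [set a | N a x y != 0%N].
Proof. by case: wf. Qed.
Lemma wf_unit a b : (N a e b != 0%N) = (a == b).
Proof. by case: wf. Qed.
Lemma wf_assoc a x b' b c : N a x b' != 0%N -> N b' b c != 0%N ->
         exists b'', N b'' x b != 0%N /\ N a b'' c != 0%N.
Proof. by case: wf => _ _ H _ _; apply: H. Qed.
Lemma wf_mass b c : \sum_(a \in [set a | N a b c != 0%N]) d a ^+ 2 <= (d b * d c) ^+ 2.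
Proof. by case: wf. Qed.
Lemma wf_d1 a : 1 <= d a.
Proof. by case: wf => _ _ _ _ []. Qed.
Lemma wf_ex x y : exists a, N a x y != 0%N.
Proof. by case: wf => _ _ _ _ []. Qed.

Lemma pc_nil a : (pc [::] a != 0%N) = (a == e).
Proof. by rewrite /=; case: (a == e). Qed.

Lemma supp_fin xs : finite_set [set a | pc xs a != 0%N].
Proof.
elim: xs => [|x xs IH].
  apply: sub_finite_set (finite_set1 e) => a /=; rewrite pc_nil => /eqP.
  done.
apply: (sub_finite_set (B := \bigcup_(b in [set b | pc xs b != 0%N]) [set a | N a x b != 0%N])).
  move=> a /= /nsum_neq0 [b]; rewrite muln_eq0 negb_or => /andP[H1 H2].
  by exists b.
by apply: bigcup_finite => // b _; apply: wf_fin.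
Qed.

Lemma pc_cons x xs a : pc (x :: xs) a != 0%N <-> exists b, N a x b != 0%N /\ pc xs b != 0%N.
Proof.
split.
  move=> /nsum_neq0 [b]; rewrite muln_eq0 negb_or => /andP[H1 H2].
  by exists b.
move=> [b [H1 H2]]; apply: (@nsum_neq0' _ b).
  apply: sub_finite_set (supp_fin xs) => c /=; rewrite muln_eq0 negb_or.
  by case/andP.
by rewrite muln_eq0 negb_or H1 H2.
Qed.

Lemma pc_e_cons xs a : pc (e :: xs) a != 0%N <-> pc xs a != 0%N.
Proof.
rewrite pc_cons; split.
  by move=> [b [H1 H2]]; move: H1; rewrite wf_unit => /eqP ->.
by move=> H; exists a; rewrite wf_unit eqxx.
Qed.

Lemma pc_filter ws a : pc [seq w <- ws | w != e] a != 0%N <-> pc ws a != 0%N.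
Proof.
elim: ws a => [//|w ws IH] a.
case: (eqVneq w e) => [->|ne].
  have -> : [seq w <- e :: ws | w != e] = [seq w <- ws | w != e] by rewrite /= eqxx.
  by rewrite IH pc_e_cons.
have -> : [seq w <- w :: ws | w != e] = w :: [seq w <- ws | w != e] by rewrite /= ne.
rewrite !pc_cons; split=> -[b [H1 H2]]; exists b; split => //; apply/IH => //.
Qed.

Lemma pc_exists xs : exists a, pc xs a != 0%N.
Proof.
elim: xs => [|x xs [b Hb]]; first by exists e; rewrite pc_nil.
have [a Ha] := wf_ex x b; exists a; apply/pc_cons; by exists b.
Qed.

Local Notation B := (@Defs.ball A).

Definition prodset (S T : set I) : set I :=
  [set a | exists b c, [/\ S b, T c & N a b c != 0%N]].

Lemma ball_e X n : B X n e.
Proof. by left. Qed.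

Lemma ball_mono X m n : (m <= n)%N -> B X m `<=` B X n.
Proof.
move=> mn a [->|[xs [/andP[H0 H1] H2 H3]]]; first by left.
right; exists xs; split => //; rewrite H0 /=; exact: leq_trans H1 mn.
Qed.

Lemma ball0 X a : B X 0 a -> a = e.
Proof. by case=> // -[xs [/andP[H0 H1] _ _]]; move: H0; rewrite lt0n; move: H1; rewrite leqn0 => ->. Qed.

Lemma ball_S X n : B X n.+1 `<=` B X n `|` prodset X (B X n).
Proof.
move=> a [->|[[|x xs] [/andP[H0 H1] H2 H3]]]; first by left; left.
  by [].
right.
have [b [Hb1 Hb2]] := (pc_cons x xs a).1 H3.
exists x, b; split => //.
  by apply: H2; rewrite inE eqxx.
move: H1 H2 Hb2 {H3 H0}; case: xs => [|y ys] H1 H2 Hb2.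
  by left; move: Hb2; rewrite pc_nil => /eqP.
right; exists (y :: ys); split => //.
by move=> z zin; apply: H2; rewrite inE zin orbT.
Qed.

Lemma prodset_ball X n : prodset X (B X n) `<=` B X n.+1.
Proof.
move=> a [x [b [Xx [->|[xs [/andP[H0 H1] H2 H3]]] Hab]]].
  right; exists [:: x]; split => //.
    by move=> z; rewrite inE => /eqP ->.
  by apply/pc_cons; exists e; rewrite pc_nil.
right; exists (x :: xs); split => //.
  by move=> z; rewrite inE => /orP[/eqP ->//|]; apply: H2.
by apply/pc_cons; exists b.
Qed.

Lemma prodset_fin S T : finite_set S -> finite_set T -> finite_set (prodset S T).
Proof.
move=> fS fT.
apply: (sub_finite_set (B := \bigcup_(b in S) \bigcup_(c in T) [set a | N a b c != 0%N])).
  by move=> a [b [c [Sb Tc H]]]; exists b => //; exists c.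
by apply: bigcup_finite => // b _; apply: bigcup_finite => // c _; apply: wf_fin.
Qed.

Lemma prodset_monol S S' T : S `<=` S' -> prodset S T `<=` prodset S' T.
Proof. by move=> SS a [b [c [Sb Tc H]]]; exists b, c; split => //; apply: SS. Qed.

Lemma ball_fin X n : finite_set X -> finite_set (B X n).
Proof.
move=> fX; elim: n => [|n IH].
  by apply: sub_finite_set (finite_set1 e) => a /ball0.
apply: sub_finite_set (ball_S (X:=X) (n:=n)) _.
by rewrite finite_setU; split => //; apply: prodset_fin.
Qed.

Lemma ball_add X n m : B X (n + m) `<=` prodset (B X n) (B X m).
Proof.
elim: n => [|n IH] a.
  by move=> Ha; exists e, a; split => //; [left|rewrite wf_unit].
rewrite addSn => /ball_S [/IH|].
  by apply: prodset_monol; apply: ball_mono.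
move=> [x [b' [Xx /IH [b [c [Hb Hc Hb'bc]]] Hab']]].
have [b'' [H1 H2]] := wf_assoc Hab' Hb'bc.
exists b'', c; split => //.
by apply: prodset_ball; exists x, b.
Qed.

Local Notation dmass := (@dmass A).

Lemma le_fsum (J : choiceType) (P : set J) (F G : J -> Rdefinitions.R) : finite_set P ->
  (forall i, P i -> F i <= G i) -> \sum_(i \in P) F i <= \sum_(i \in P) G i.
Proof.
move=> fP FG; rewrite !fsbig_finite //= big_seq [leRHS]big_seq; apply: ler_sum => i.
by rewrite in_fset_set // inE => /FG.
Qed.

Lemma dmass_ge0 S : 0 <= dmass S.
Proof. by apply: fsumr_ge0 => i _; apply: sqr_ge0. Qed.

Lemma dmass_mono S T : finite_set T -> S `<=` T -> dmass S <= dmass T.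
Proof.
move=> fT ST; have fS : finite_set S by apply: sub_finite_set fT.
have -> : T = S `|` (T `\` S) by rewrite setDUK.
rewrite /dmass fsbigU0 //.
- by rewrite lerDl; apply: fsumr_ge0 => i _; apply: sqr_ge0.
- exact: finite_setD.
- by move=> x [Sx [_ /(_ Sx)]].
Qed.

Lemma dmass_U S T : finite_set S -> finite_set T -> dmass (S `|` T) <= dmass S + dmass T.
Proof.
move=> fS fT.
have -> : S `|` T = S `|` (T `\` S).
  by apply/seteqP; split => x /=; [case=> [?|?]; [left|]; [|case: (pselect (S x)) => ?; [left|right]]|case=> [?|[]]]; auto.
rewrite /dmass fsbigU0 //.
- rewrite lerD2l; apply: dmass_mono => //; exact: subDsetl.
- exact: finite_setD.
- by move=> x [Sx [_ /(_ Sx)]].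
Qed.

Lemma dmass_set1 a : dmass [set a] = d a ^+ 2.
Proof. by rewrite /dmass fsbig_set1. Qed.

Lemma dmass_big (J : Type) (r : seq J) (F : J -> set I) : (forall j, finite_set (F j)) ->
  dmass (\big[setU/set0]_(j <- r) F j) <= \sum_(j <- r) dmass (F j).
Proof.
move=> fF; elim: r => [|j r IH]; first by rewrite !big_nil /dmass fsbig_set0.
rewrite !big_cons; apply: le_trans (dmass_U _ _) _ => //.
  elim: r {IH} => [|k r IH]; first by rewrite big_nil.
  by rewrite big_cons finite_setU.
by rewrite lerD2l.
Qed.

Lemma dmass_prodset S T : finite_set S -> finite_set T ->
  dmass (prodset S T) <= dmass S * dmass T.
Proof.
move=> fS fT; have fST := finite_setX fS fT.
pose F (p : I * I) := [set a | N a p.1 p.2 != 0%N].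
have sub : prodset S T `<=` \big[setU/set0]_(p <- finmap.enum_fset (fset_set (S `*` T))) F p.
  rewrite bigsetU_fset_set //.
  by move=> a [b [c [Sb Tc H]]]; exists (b, c).
apply: le_trans (dmass_mono _ sub) _.
  by rewrite bigsetU_fset_set //; apply: bigcup_finite => // p _; apply: wf_fin.
apply: le_trans (dmass_big _ _) _; first by move=> p; apply: wf_fin.
apply: (@le_trans _ _ (\sum_(p <- finmap.enum_fset (fset_set (S `*` T))) (d p.1 * d p.2) ^+ 2)).
  by apply: ler_sum => p _; apply: wf_mass.
rewrite -fsbig_finite //.
rewrite -(pair_fsbig _ (fun b c => (d b * d c) ^+ 2)) // /dmass mulr_fsuml.
rewrite le_eqVlt; apply/orP; left; apply/eqP.
apply: eq_fsbigr => b _; rewrite mulr_fsumr; apply: eq_fsbigr => c _.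
by rewrite exprMn.
Qed.

Lemma dmass_ball_ge1 X n : finite_set X -> 1 <= dmass (B X n).
Proof.
move=> fX; apply: le_trans (dmass_mono (ball_fin n fX) (_ : [set e] `<=` _)).
  rewrite dmass_set1; have h := wf_d1 e.
  by rewrite -[1](expr1n _ 2); apply: lerXn2r => //; rewrite nnegrE ?(le_trans ler01 h).

by move=> a ->; apply: ball_e.
Qed.

Lemma dmass_ball_submul X n m : finite_set X ->
  dmass (B X (n + m)) <= dmass (B X n) * dmass (B X m).
Proof.
move=> fX; apply: le_trans (dmass_prodset (ball_fin n fX) (ball_fin m fX)).
apply: dmass_mono (ball_add (X := X) (n:=n) (m:=m)).
by apply: prodset_fin; apply: ball_fin.
Qed.

Lemma dmass_ball_mono X n m : finite_set X -> (n <= m)%N ->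
  dmass (B X n) <= dmass (B X m).
Proof. by move=> fX nm; apply: dmass_mono (ball_mono nm); apply: ball_fin. Qed.
End G.

Section Fek.
Variable R : realType.
Variable b : nat -> R.
Hypotheses (b1 : forall n, 1 <= b n) (bsub : forall n m, b (n + m) <= b n * b m)
  (bmono : forall n m, (n <= m)%N -> b n <= b m).

Let u n := b n `^ (n%:R)^-1.

Lemma bern (x : R) n : 0 <= x -> 1 + n%:R * x <= (1 + x) ^+ n.
Proof.
move=> x0; elim: n => [|n IH]; first by rewrite mul0r addr0 expr0.
rewrite exprS; apply: le_trans (_ : (1 + x) * (1 + n%:R * x) <= _); last first.
  by apply: ler_wpM2l => //; rewrite addr_ge0.
rewrite mulrDl mul1r mulrDr mulr1 -natr1 mulrDl mul1r.
have h : 0 <= x * (n%:R * x) by rewrite mulr_ge0 // mulr_ge0.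
lra.
Qed.

Lemma b_pow K q : b (q.+1 * K) <= b K ^+ q.+1.
Proof.
elim: q => [|q IH]; first by rewrite mul1n expr1.
rewrite mulSn exprS; apply: le_trans (bsub _ _) _.
apply: ler_wpM2l => //; exact: le_trans ler01 (b1 _).
Qed.

Lemma b_quot K j : (0 < K)%N -> b j <= b K ^+ (j %/ K)%N.+1.
Proof.
move=> K0; case E: (j %/ K)%N => [|q].
  rewrite expr1; apply: bmono.
  by rewrite {1}(div.divn_eq j K) E mul0n add0n; apply: ltnW; rewrite ltn_mod.
rewrite {1}(div.divn_eq j K) E; apply: le_trans (bsub _ _) _.
rewrite exprSr; apply: ler_pM.
- exact: le_trans ler01 (b1 _).
- exact: le_trans ler01 (b1 _).
- exact: b_pow.
- by apply: bmono; apply: ltnW; rewrite ltn_mod.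
Qed.

Lemma b_ge0 n : 0 <= b n.
Proof. exact: le_trans ler01 (b1 _). Qed.

Lemma powR_root (c : R) n : 0 <= c -> (0 < n)%N -> (c ^+ n) `^ (n%:R^-1) = c.
Proof.
move=> c0 n0; rewrite -powR_mulrn // -powRrM mulfV ?powRr1 //.
by rewrite pnatr_eq0 -lt0n.
Qed.

Lemma root_pow (c : R) n : 0 <= c -> (0 < n)%N -> (c `^ (n%:R^-1)) ^+ n = c.
Proof.
move=> c0 n0; rewrite -powR_mulrn ?powR_ge0 // -powRrM mulVf ?powRr1 //.
by rewrite pnatr_eq0 -lt0n.
Qed.

Lemma u_ge1 n : 1 <= u n.
Proof.
rewrite /u -[leLHS](powRr0 (b n)); apply: ler_powR => //.
Qed.

Lemma bound_geo K j : (0 < K)%N -> b j <= b K * u K ^+ j.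
Proof.
move=> K0; apply: le_trans (b_quot j K0) _.
rewrite exprS; apply: ler_wpM2l; first exact: b_ge0.
rewrite -{1}(root_pow (b_ge0 K) K0) -exprM.
apply: ler_weXn2l; first exact: u_ge1.
by rewrite mulnC leq_trunc_div.
Qed.

Lemma root_mul (c g : R) n : 0 <= c -> 0 <= g -> (0 < n)%N ->
  (c * g ^+ n) `^ (n%:R^-1) = c `^ (n%:R^-1) * g.
Proof.
by move=> c0 g0 n0; rewrite powRM ?exprn_ge0 // powR_root.
Qed.

Lemma root_small (c eps : R) n : 0 <= c -> 0 < eps -> (0 < n)%N ->
  c <= n%:R * eps -> c `^ (n%:R^-1) <= 1 + eps.
Proof.
move=> c0 e0 n0 cle.
have e1 : 0 <= 1 + eps by rewrite addr_ge0 // ltW.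
rewrite -[leRHS](powR_root e1 n0).
apply: ge0_ler_powR.
- by rewrite invr_ge0.
- by rewrite nnegrE.
- by rewrite nnegrE exprn_ge0.
apply: le_trans (bern _ (ltW e0)); apply: le_trans cle _; lra.
Qed.

Let E := [set u n | n in [set n : nat | (0 < n)%N]].
Definition fekL := inf E.

Lemma E_lb : has_lbound E.
Proof. by exists 1 => y [n _ <-]; apply: u_ge1. Qed.

Lemma L_le n : (0 < n)%N -> fekL <= u n.
Proof. by move=> n0; apply: ge_inf; [exact: E_lb|exists n]. Qed.

Lemma L_ge1 : 1 <= fekL.
Proof.
apply: lb_le_inf; first by exists (u 1); exists 1%N.
by move=> y [n _ <-]; apply: u_ge1.
Qed.

Lemma L_approx eps : 0 < eps -> exists K, (0 < K)%N /\ u K < fekL + eps.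
Proof.
move=> e0; have ne : E !=set0 by exists (u 1); exists 1%N.
have lt : inf E < fekL + eps by rewrite /fekL ltrDl.
have [y [K K0 <-] H] := inf_lt ne lt.
by exists K.
Qed.

Lemma fekete : limn u = fekL.
Proof.
apply: cvg_lim => //; apply/cvgrPdist_le => eps e0.
have L1 := L_ge1.
pose del := Num.min 1 (eps / (fekL + 2)).
have d0 : 0 < del by rewrite lt_min ltr01 divr_gt0 //; lra.
have d1 : del <= 1 by rewrite ge_min lexx.
have d2 : del * (fekL + 2) <= eps.
  by rewrite -ler_pdivlMr ?ge_min ?lexx ?orbT //; lra.
have [K [K0 HK]] := L_approx d0.
pose N := (Num.truncn (b K / del)).+1.
near=> n.
have Nn : (N <= n)%N by near: n; exact: nbhs_infty_ge.
have n0 : (0 < n)%N by apply: leq_trans Nn.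
have lo := L_le n0.
have hi : u n <= (1 + del) * (fekL + del).
  apply: (@le_trans _ _ (b K `^ (n%:R^-1) * u K)).
    rewrite -root_mul ?b_ge0 ?(le_trans ler01 (u_ge1 _)) //.
    apply: ge0_ler_powR; rewrite ?nnegrE ?invr_ge0 ?b_ge0 //.
      by rewrite mulr_ge0 ?b_ge0 ?exprn_ge0 ?(le_trans ler01 (u_ge1 _)).
    exact: bound_geo.
  apply: ler_pM; [exact: powR_ge0|exact: (le_trans ler01 (u_ge1 _))| |exact: ltW].
  apply: root_small; rewrite ?b_ge0 //.
  rewrite -ler_pdivrMr //; apply: ltW; apply: lt_le_trans (truncnS_gt _) _.
  by rewrite ler_nat.
rewrite ler_norml; apply/andP; split.
  have : 0 <= eps by lra.
  nra.
have : 0 <= del * (fekL + 2) by rewrite mulr_ge0 //; lra.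
nra.
Unshelve. all: by end_near.
Qed.
End Fek.



Lemma fsum_ge_term (J : choiceType) (P : set J) (F : J -> Rdefinitions.R) j :
  (forall i, P i -> 0 <= F i) -> finite_set [set i | P i /\ F i != 0] -> P j ->
  F j <= \sum_(i \in P) F i.
Proof.
move=> F0 fin Pj; case: (eqVneq (F j) 0) => [->|Fj]; first exact: fsumr_ge0.
rewrite fsbig_supp (fsbigD1 j) //=.
- rewrite lerDl; apply: fsumr_ge0 => i [[Pi _] _]; exact: F0.
- by apply: sub_finite_set fin => i [Pi /= /eqP]; split.
- by split => //; apply/eqP.
Qed.

Section FA.
Variable A : fusion_data.
Local Notation I := (fa_I A).
Local Notation e := (@fa_e A).
Local Notation N := (@fa_N A).
Local Notation d := (@fa_d A).

Lemma fusion_WF : is_fusion_algebra A -> WF A.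
Proof.
move=> [inv [fin [hunit [assoc [anti [frob [dmul [dbar d1]]]]]]]].
have d0 a : 0 <= d a by apply: le_trans ler01 (d1 a).
have dfin b c : finite_set [set a | [set: I] a /\ (N a b c)%:R * d a != 0].
  apply: sub_finite_set (fin b c) => a /= [_]; apply: contra => /eqP ->.
  by rewrite mul0r.
have dle a b c : N a b c != 0%N -> d a <= d b * d c.
  move=> H; rewrite dmul; apply: le_trans (fsum_ge_term _ _ _) => //.
  - rewrite -[leLHS]mul1r; apply: ler_wpM2r => //.
    by rewrite ler1n lt0n.
  - by move=> i _; rewrite mulr_ge0.
split.
- exact: fin.
- by move=> a b; have [-> _] := hunit b a; case: (a == b).
- move=> a x b' b c H1 H2.
  have := assoc x b c a.
  have fR : finite_set [set b0 | (N b0 b c * N a x b0)%N != 0%N].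
    by apply: sub_finite_set (fin b c) => b0 /=; rewrite muln_eq0 negb_or => /andP[].
  have : nsum (fun b0 => (N b0 b c * N a x b0)%N) != 0%N.
    by apply: (@nsum_neq0' _ _ b' fR); rewrite muln_eq0 negb_or H2 H1.
  move=> + E; rewrite -E => /nsum_neq0 [b'' ]; rewrite muln_eq0 negb_or => /andP[].
  by exists b''.
- move=> b c.
  apply: (@le_trans _ _ (\sum_(a \in [set a | N a b c != 0%N]) ((N a b c)%:R * d a * (d b * d c)))).
    apply: le_fsum => // a /= H.
    rewrite expr2; apply: ler_pM => //; last exact: dle.
    by rewrite -[leLHS]mul1r; apply: ler_wpM2r => //; rewrite ler1n lt0n.
  rewrite -mulr_fsuml expr2; apply: ler_wpM2r; first by rewrite mulr_ge0.
  rewrite dmul le_eqVlt; apply/orP; left; apply/eqP.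
  apply: fsbig_widen => // a [_ /=] /negP; rewrite negbK => /eqP ->.
  by rewrite mul0r.
- split => // x y.
  have : d x * d y != 0 by rewrite gt_eqF // mulr_gt0 // (lt_le_trans ltr01 (d1 _)).
  rewrite dmul => H.
  have [a _ Ha] := @fsbigN1 _ _ _ Datatypes.unit _ _ (fun _ a => (N a x y)%:R * d a) tt H.
  by exists a; move: Ha; apply: contra => /eqP ->; rewrite mul0r.
Qed.
End FA.

Section Prod.
Variables A1 A2 : fusion_data.
Hypotheses (w1 : WF A1) (w2 : WF A2).
Local Notation P := (product_fusion A1 A2).

Lemma prod_WF : WF P.
Proof.
have d0 (A : fusion_data) (w : WF A) (a : fa_I A) : 0 <= fa_d a by apply: le_trans ler01 (wf_d1 w a).
split.
- move=> [x1 x2] [y1 y2].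
  apply: sub_finite_set (finite_setX (wf_fin w1 x1 y1) (wf_fin w2 x2 y2)) => -[a1 a2] /=.
  by rewrite muln_eq0 negb_or => /andP[].
- move=> [a1 a2] [b1 b2] /=.
  by rewrite muln_eq0 negb_or (wf_unit w1) (wf_unit w2) xpair_eqE.
- move=> [a1 a2] [x1 x2] [c1 c2] [b1 b2] [f1 f2] /=.
  rewrite !muln_eq0 !negb_or => /andP[H1 H2] /andP[H3 H4].
  have [g1 [G1 G1']] := wf_assoc w1 H1 H3.
  have [g2 [G2 G2']] := wf_assoc w2 H2 H4.
  by exists (g1, g2) => /=; rewrite !muln_eq0 !negb_or G1 G1' G2 G2'.
- move=> [b1 b2] [c1 c2] /=.
  have -> : [set a : fa_I P | (fa_N a.1 b1 c1 * fa_N a.2 b2 c2)%N != 0%N] =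
     [set a | fa_N a b1 c1 != 0%N] `*` [set a | fa_N a b2 c2 != 0%N].
    apply/seteqP; split => -[a1 a2] /=; rewrite muln_eq0 negb_or.
      by move=> /andP[].
    by move=> [-> ->].
  rewrite -(pair_fsbig _ (fun a1 a2 => (fa_d a1 * fa_d a2) ^+ 2)); try exact: wf_fin.
  under eq_fsbigr do under eq_fsbigr do rewrite exprMn.
  under eq_fsbigr do rewrite -mulr_fsumr.
  rewrite -mulr_fsuml.
  have -> : (fa_d b1 * fa_d b2 * (fa_d c1 * fa_d c2)) ^+ 2 =
     (fa_d b1 * fa_d c1) ^+ 2 * (fa_d b2 * fa_d c2) ^+ 2.
    by rewrite -!exprMn; congr (_ ^+ 2); rewrite -!mulrA; congr (_ * _);
       rewrite mulrCA.
  apply: ler_pM; try exact: wf_mass.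
  + by apply: fsumr_ge0 => ? _; apply: sqr_ge0.
  + by apply: fsumr_ge0 => ? _; apply: sqr_ge0.
- split.
  + move=> [a1 a2] /=; rewrite -[1]mulr1; apply: ler_pM => //; try exact: wf_d1.
  + move=> [x1 x2] [y1 y2].
    have [a1 H1] := wf_ex w1 x1 y1; have [a2 H2] := wf_ex w2 x2 y2.
    by exists (a1, a2) => /=; rewrite muln_eq0 negb_or H1 H2.
Qed.
End Prod.


Lemma bar_e (A : fusion_data) : is_fusion_algebra A -> fa_bar (fa_e A) = fa_e A.
Proof.
move=> [inv [fin [hunit [assoc [anti _]]]]].
have := anti (fa_e A) (fa_bar (fa_e A)) (fa_e A).
rewrite inv (hunit _ _).2 eqxx (hunit _ _).2.
by case: eqVneq.
Qed.

Lemma ball_word (A : fusion_data) (wf : WF A) (X : set (fa_I A)) ws a :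
  (forall x, x \in ws -> X x) -> prod_coef ws a != 0%N -> Defs.ball X (size ws) a.
Proof.
case: ws => [|w ws] H1 H2; first by left; move: H2; rewrite pc_nil => /eqP.
rewrite /Defs.ball /=; right; exists (w :: ws); split => //=; exact: leqnn.
Qed.

Section Main.
Variables A1 A2 : fusion_data.
Hypotheses (w1 : WF A1) (w2 : WF A2).
Local Notation P := (product_fusion A1 A2).
Local Notation wP := (prod_WF w1 w2).
Local Notation e1 := (@fa_e A1).
Local Notation e2 := (@fa_e A2).

Lemma pc_prod (zs : seq (fa_I P)) (a : fa_I P) :
  prod_coef zs a != 0%N <->
  prod_coef (map fst zs) a.1 != 0%N /\ prod_coef (map snd zs) a.2 != 0%N.
Proof.
elim: zs a => [|z zs IH] [a1 a2].
  by rewrite /= xpair_eqE; case: (a1 == e1); case: (a2 == e2); split => // -[].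
split.
  move=> /(pc_cons wP) [[b1 b2] [H /IH [/= Hb1 Hb2]]]; move: H => /=; rewrite muln_eq0 negb_or => /andP[H1 H2].
  by split; apply/pc_cons => //; [exists b1|exists b2].
move=> [/(pc_cons w1) [b1 [H1 Hb1]] /(pc_cons w2) [b2 [H2 Hb2]]].
apply/(pc_cons wP); exists (b1, b2) => /=.
by rewrite muln_eq0 negb_or H1 H2; split => //; apply/IH.
Qed.

Lemma lift1 (X : set (fa_I P)) xs : (forall x, x \in xs -> (fst @` X) x) ->
  exists zs : seq (fa_I P), map fst zs = xs /\ forall z, z \in zs -> X z.
Proof.
elim: xs => [|x xs IH] H; first by exists [::].
have [z Xz zx] : (fst @` X) x by apply: H; rewrite inE eqxx.
have [zs [E Hzs]] : exists zs : seq (fa_I P), map fst zs = xs /\ forall z, z \in zs -> X z.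
  by apply: IH => y yin; apply: H; rewrite inE yin orbT.
exists (z :: zs); split; first by rewrite /= E zx.
by move=> y; rewrite inE => /orP[/eqP ->|]; [|apply: Hzs].
Qed.

Lemma lift2 (X : set (fa_I P)) xs : (forall x, x \in xs -> (snd @` X) x) ->
  exists zs : seq (fa_I P), map snd zs = xs /\ forall z, z \in zs -> X z.
Proof.
elim: xs => [|x xs IH] H; first by exists [::].
have [z Xz zx] : (snd @` X) x by apply: H; rewrite inE eqxx.
have [zs [E Hzs]] : exists zs : seq (fa_I P), map snd zs = xs /\ forall z, z \in zs -> X z.
  by apply: IH => y yin; apply: H; rewrite inE yin orbT.
exists (z :: zs); split; first by rewrite /= E zx.
by move=> y; rewrite inE => /orP[/eqP ->|]; [|apply: Hzs].
Qed.

Lemma gen_fst (X : set (fa_I P)) : is_gen_set X -> is_gen_set (fst @` X).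
Proof.
move=> [fX bX gX]; split.
- exact: finite_image.
- apply/seteqP; split => y.
    move=> [_ [z Xz <-] <-].
    have : (@fa_bar P @` X) (@fa_bar P z) by exists z.
    by rewrite bX => H; exists (@fa_bar P z).
  move=> [z Xz <-]; rewrite -bX in Xz; case: Xz => w Xw <-.
  by exists w.1; [exists w|].
- move=> a1; have [zs [H0 H1 H2]] := gX (a1, e2).
  exists (map fst zs); split.
  + by rewrite size_map.
  + by move=> x /mapP [z zin ->]; exists z => //; apply: H1.
  + by have [] := (pc_prod zs (a1, e2)).1 H2.
Qed.

Lemma gen_snd (X : set (fa_I P)) : is_gen_set X -> is_gen_set (snd @` X).
Proof.
move=> [fX bX gX]; split.
- exact: finite_image.
- apply/seteqP; split => y.
    move=> [_ [z Xz <-] <-].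
    have : (@fa_bar P @` X) (@fa_bar P z) by exists z.
    by rewrite bX => H; exists (@fa_bar P z).
  move=> [z Xz <-]; rewrite -bX in Xz; case: Xz => w Xw <-.
  by exists w.2; [exists w|].
- move=> a2; have [zs [H0 H1 H2]] := gX (e1, a2).
  exists (map snd zs); split.
  + by rewrite size_map.
  + by move=> x /mapP [z zin ->]; exists z => //; apply: H1.
  + by have [] := (pc_prod zs (e1, a2)).1 H2.
Qed.

Lemma ball_fst (X : set (fa_I P)) n a1 : Defs.ball (fst @` X) n a1 -> exists a2, Defs.ball X n (a1, a2).
Proof.
case=> [->|[xs [Hs Hx Hp]]]; first by exists e2; left.
have [zs [E Hz]] := lift1 Hx.
have [a2 Ha2] := pc_exists w2 (map snd zs).
exists a2; right; exists zs; split.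
- by rewrite -(size_map fst) E.
- exact: Hz.
- by apply/pc_prod; rewrite E.
Qed.

Lemma ball_snd (X : set (fa_I P)) n a2 : Defs.ball (snd @` X) n a2 -> exists a1, Defs.ball X n (a1, a2).
Proof.
case=> [->|[xs [Hs Hx Hp]]]; first by exists e1; left.
have [zs [E Hz]] := lift2 Hx.
have [a1 Ha1] := pc_exists w1 (map fst zs).
exists a1; right; exists zs; split.
- by rewrite -(size_map snd) E.
- exact: Hz.
- by apply/pc_prod; rewrite E.
Qed.

Lemma dmass_fst (X : set (fa_I P)) n : finite_set X ->
  dmass (Defs.ball (fst @` X) n) <= dmass (Defs.ball X n).
Proof.
move=> fX.
pose g a1 := xget e2 [set a2 | Defs.ball X n (a1, a2)].
have Hg a1 : Defs.ball (fst @` X) n a1 -> Defs.ball X n (a1, g a1).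
  move=> /ball_fst [a2 H]; rewrite /g; case: xgetP => //= Hn.
  by exfalso; apply: (Hn a2).
have fB1 : finite_set (Defs.ball (fst @` X) n) by apply: (ball_fin w1); apply: finite_image.
apply: (@le_trans _ _ (\sum_(a \in Defs.ball (fst @` X) n) (fa_d a * fa_d (g a)) ^+ 2)).
  apply: le_fsum => // a _; apply: lerXn2r; rewrite ?nnegrE ?mulr_ge0 ?(le_trans ler01 (wf_d1 _ _)) //.
  by rewrite ler_peMr ?(le_trans ler01 (wf_d1 _ _)) ?(wf_d1 w2).
have -> : \sum_(a \in Defs.ball (fst @` X) n) (fa_d a * fa_d (g a)) ^+ 2 =
    \sum_(p \in (fun a => (a, g a)) @` Defs.ball (fst @` X) n) (@fa_d P p) ^+ 2.
  by rewrite fsbig_image // => x y _ _ [].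
change (dmass ((fun a => (a, g a) : fa_I P) @` Defs.ball (fst @` X) n) <= dmass (Defs.ball X n)).
apply: dmass_mono; first exact: (ball_fin wP n fX).
by move=> _ [a Ha <-]; apply: Hg.
Qed.

Lemma dmass_snd (X : set (fa_I P)) n : finite_set X ->
  dmass (Defs.ball (snd @` X) n) <= dmass (Defs.ball X n).
Proof.
move=> fX.
pose g a2 := xget e1 [set a1 | Defs.ball X n (a1, a2)].
have Hg a2 : Defs.ball (snd @` X) n a2 -> Defs.ball X n (g a2, a2).
  move=> /ball_snd [a1 H]; rewrite /g; case: xgetP => //= Hn.
  by exfalso; apply: (Hn a1).
have fB2 : finite_set (Defs.ball (snd @` X) n) by apply: (ball_fin w2); apply: finite_image.
apply: (@le_trans _ _ (\sum_(a \in Defs.ball (snd @` X) n) (fa_d (g a) * fa_d a) ^+ 2)).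
  apply: le_fsum => // a _; apply: lerXn2r; rewrite ?nnegrE ?mulr_ge0 ?(le_trans ler01 (wf_d1 _ _)) //.
  by rewrite ler_peMl ?(le_trans ler01 (wf_d1 _ _)) ?(wf_d1 w1).
have -> : \sum_(a \in Defs.ball (snd @` X) n) (fa_d (g a) * fa_d a) ^+ 2 =
    \sum_(p \in (fun a => (g a, a)) @` Defs.ball (snd @` X) n) (@fa_d P p) ^+ 2.
  by rewrite fsbig_image // => x y _ _ [].
change (dmass ((fun a => (g a, a) : fa_I P) @` Defs.ball (snd @` X) n) <= dmass (Defs.ball X n)).
apply: dmass_mono; first exact: (ball_fin wP n fX).
by move=> _ [a Ha <-]; apply: Hg.
Qed.

Definition Xprod (X1 : set (fa_I A1)) (X2 : set (fa_I A2)) : set (fa_I P) :=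
  [set p | (X1 p.1 /\ p.2 = e2) \/ (p.1 = e1 /\ X2 p.2)].

Lemma gen_bar (A : fusion_data) (X : set (fa_I A)) x :
  is_fusion_algebra A -> is_gen_set X -> X x -> X (fa_bar x).
Proof.
move=> [inv _] [_ bX _]; rewrite -{1}bX => -[y Xy <-].
by rewrite inv.
Qed.

Lemma filter_const (s : seq (fa_I A2)) : [seq w <- map (fun _ => e1) s | w != e1] = [::].
Proof. by elim: s => //= y ys ->; rewrite eqxx. Qed.

Lemma filter_const2 (s : seq (fa_I A1)) : [seq w <- map (fun _ => e2) s | w != e2] = [::].
Proof. by elim: s => //= y ys ->; rewrite eqxx. Qed.

Lemma gen_prod X1 X2 : is_fusion_algebra A1 -> is_fusion_algebra A2 ->
  is_gen_set X1 -> is_gen_set X2 -> is_gen_set (Xprod X1 X2).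
Proof.
move=> h1 h2 g1 g2.
have be1 := bar_e h1; have be2 := bar_e h2.
have [inv1 _] := h1; have [inv2 _] := h2.
have sub : forall p, Xprod X1 X2 p -> Xprod X1 X2 (@fa_bar P p).
  move=> [p1 p2] [[H1 /= ->]|[/= -> H2]].
    by left; split => //=; apply: gen_bar.
  by right; split => //=; apply: gen_bar.
case: (g1) => f1 _ gg1; case: (g2) => f2 _ gg2.
split.
- apply: (sub_finite_set (B := (X1 `*` [set e2]) `|` ([set e1] `*` X2))).
    by move=> p [[? ?]|[? ?]]; [left|right].
  by rewrite finite_setU; split; apply: finite_setX.
- apply/seteqP; split => p.
    by move=> [q Xq <-]; apply: sub.
  move=> Xp; exists (@fa_bar P p); first exact: sub.
  by case: p {Xp} => p1 p2 /=; rewrite inv1 inv2.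
- move=> [a1 a2].
  have [xs1 [s1 m1 c1]] := gg1 a1; have [xs2 [s2 m2 c2]] := gg2 a2.
  exists (map (fun x => (x, e2)) xs1 ++ map (fun y => (e1, y)) xs2); split.
  + by rewrite size_cat size_map addn_gt0 s1.
  + move=> z; rewrite mem_cat => /orP[] /mapP [x xin ->].
      by left; split => //; apply: m1.
    by right; split => //; apply: m2.
  + apply/pc_prod; rewrite /= !map_cat -!map_comp /=; split.
      apply/(pc_filter w1); rewrite filter_cat filter_const cats0; apply/(pc_filter w1).
      by rewrite map_id.
    apply/(pc_filter w2); rewrite filter_cat filter_const2 /=; apply/(pc_filter w2).
    by rewrite map_id.
Qed.

Lemma mem_bigU (T : Type) (r : seq nat) (F : nat -> set T) j x :
  j \in r -> F j x -> (\big[setU/set0]_(k <- r) F k) x.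
Proof.
elim: r => // k r IH; rewrite inE big_cons => /orP[/eqP <- H|H H']; first by left.
by right; apply: IH.
Qed.

Lemma fin_bigU (T : Type) (r : seq nat) (F : nat -> set T) :
  (forall k, finite_set (F k)) -> finite_set (\big[setU/set0]_(k <- r) F k).
Proof.
move=> fF; elim: r => [|k r IH]; first by rewrite big_nil.
by rewrite big_cons finite_setU.
Qed.

Lemma size_split X1 X2 (zs : seq (fa_I P)) : (forall z, z \in zs -> Xprod X1 X2 z) ->
  (size [seq w <- map fst zs | w != e1] + size [seq w <- map snd zs | w != e2] <= size zs)%N.
Proof.
elim: zs => // z zs IH H /=.
have H' : forall z, z \in zs -> Xprod X1 X2 z by move=> y yin; apply: H; rewrite inE yin orbT.
have := IH H'.
have : Xprod X1 X2 z by apply: H; rewrite inE eqxx.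
case=> [[_ ->]|[-> _]]; rewrite eqxx /=; case: ifP => _ /=; rewrite ?addSn ?addnS; lia.
Qed.

Lemma ball_prod_sub X1 X2 n :
  Defs.ball (Xprod X1 X2) n `<=`
  \big[setU/set0]_(k <- iota 0 n.+1) (Defs.ball X1 k `*` Defs.ball X2 (n - k) : set (fa_I P)).
Proof.
move=> [p1 p2] [E|[zs [/andP[s0 sn] Hz /pc_prod [/= c1 c2]]]].
  rewrite E; apply: (@mem_bigU _ _ _ 0%N); first by rewrite in_cons eqxx.
  by split; apply: ball_e.
have hs := size_split Hz.
set ws1 := [seq w <- map fst zs | w != e1] in hs *.
set ws2 := [seq w <- map snd zs | w != e2] in hs *.
apply: (@mem_bigU _ _ _ (size ws1)); first by rewrite (_ : 0%N :: iota 1 n = iota 0 n.+1) // seq.mem_iota; lia.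
split => /=.
  apply: (ball_word w1); last by apply/(pc_filter w1).
  move=> w; rewrite mem_filter => /andP[ne /mapP [z zin wE]]; rewrite wE in ne *.
  by case: (Hz z zin) => [[? _]//|[E _]]; rewrite E eqxx in ne.
apply: (ball_mono (m := size ws2)); first by move: hs sn; move: (size ws1) (size ws2) (size zs) => a b c; lia.
apply: (ball_word w2); last by apply/(pc_filter w2).
move=> w; rewrite mem_filter => /andP[ne /mapP [z zin wE]]; rewrite wE in ne *.
by case: (Hz z zin) => [[_ E]|[_ ?]//]; rewrite E eqxx in ne.
Qed.

Lemma dmassX (S1 : set (fa_I A1)) (S2 : set (fa_I A2)) : finite_set S1 -> finite_set S2 ->
  dmass (S1 `*` S2 : set (fa_I P)) = dmass S1 * dmass S2.
Proof.
move=> f1 f2; rewrite /dmass -(pair_fsbig _ (fun a1 a2 => (fa_d a1 * fa_d a2) ^+ 2)) //.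
rewrite mulr_fsuml; apply: eq_fsbigr => a1 _; rewrite mulr_fsumr; apply: eq_fsbigr => a2 _.
by rewrite exprMn.
Qed.

Lemma dmass_ball_prod X1 X2 n : finite_set X1 -> finite_set X2 ->
  dmass (Defs.ball (Xprod X1 X2) n) <=
  \sum_(k <- iota 0 n.+1) dmass (Defs.ball X1 k) * dmass (Defs.ball X2 (n - k)).
Proof.
move=> f1 f2.
have fF k : finite_set (Defs.ball X1 k `*` Defs.ball X2 (n - k) : set (fa_I P)).
  by apply: finite_setX; apply: ball_fin.
apply: le_trans (dmass_mono (fin_bigU _ fF) (@ball_prod_sub X1 X2 n)) _.
apply: le_trans (dmass_big _ fF) _.
rewrite le_eqVlt; apply/orP; left; apply/eqP; apply: eq_bigr => k _.
by rewrite dmassX //; apply: ball_fin.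
Qed.
End Main.


Section Om.
Variable A : fusion_data.
Hypothesis wf : WF A.
Local Notation bX X := (fun n => dmass (@Defs.ball A X n)).

Lemma omegaX_eq (X : set (fa_I A)) : finite_set X -> omega_X X = fekL (bX X).
Proof.
move=> fX; rewrite /omega_X; apply: fekete.
- by move=> n; apply: dmass_ball_ge1.
- by move=> n m; apply: dmass_ball_submul.
- by move=> n m nm; apply: dmass_ball_mono.
Qed.

Lemma omegaX_ge1 (X : set (fa_I A)) : finite_set X -> 1 <= omega_X X.
Proof. by move=> fX; rewrite omegaX_eq //; apply: L_ge1 => n; apply: dmass_ball_ge1. Qed.

Lemma omega_lb : has_lbound [set omega_X X | X in @is_gen_set A].
Proof. by exists 1 => _ [X [fX _ _] <-]; apply: omegaX_ge1. Qed.

Lemma omega_le (X : set (fa_I A)) : is_gen_set X -> omega A <= omega_X X.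
Proof. by move=> gX; apply: ge_inf; [exact: omega_lb|exists X]. Qed.

Lemma omega_approx eps : finitely_generated A -> 0 < eps ->
  exists X : set (fa_I A), is_gen_set X /\ omega_X X < omega A + eps.
Proof.
move=> [X0 g0] e0.
have ne : [set omega_X X | X in @is_gen_set A] !=set0 by exists (omega_X X0), X0.
have lt : inf [set omega_X X | X in @is_gen_set A] < omega A + eps by rewrite /omega ltrDl.
by have [_ [X gX <-] H] := inf_lt ne lt; exists X.
Qed.

Lemma omega_ge1 : finitely_generated A -> 1 <= omega A.
Proof.
move=> [X0 g0]; apply: lb_le_inf; first by exists (omega_X X0), X0.
by move=> _ [X [fX _ _] <-]; apply: omegaX_ge1.
Qed.
End Om.

Lemma root_small' (c eps : Rdefinitions.R) n : 0 <= c -> 0 < eps -> (0 < n)%N ->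
  c <= (1 + eps) ^+ n -> c `^ (n%:R^-1) <= 1 + eps.
Proof.
move=> c0 e0 n0 cle.
have e1 : 0 <= 1 + eps by rewrite addr_ge0 // ltW.
rewrite -[leRHS](powR_root e1 n0).
by apply: ge0_ler_powR; rewrite ?invr_ge0 ?nnegrE ?exprn_ge0.
Qed.

Lemma fekL_mono (b b' : nat -> Rdefinitions.R) : (forall n, 1 <= b n) ->
  (forall n, b n <= b' n) -> fekL b <= fekL b'.
Proof.
move=> b1 bb; rewrite {2}/fekL; apply: lb_le_inf; first by exists (b' 1%N `^ (1%:R^-1)), 1%N.
move=> _ [n n0 <-]; apply: le_trans (L_le b1 n0) _.
apply: ge0_ler_powR; rewrite ?invr_ge0 ?nnegrE //.
- exact: le_trans ler01 (b1 n).
- exact: le_trans ler01 (le_trans (b1 n) (bb n)).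
Qed.

Lemma help_big (m : nat) (beta eps : Rdefinitions.R) : (0 < m)%N -> 1 <= beta -> 0 < eps ->
  3 * beta < m%:R * eps ^+ 2 -> (2 * m).+1%:R * beta <= (1 + eps) ^+ (2 * m).
Proof.
move=> m0 b1 e0 hm.
have m1 : 1 <= m%:R :> Rdefinitions.R by rewrite ler1n.
have hb := bern m (ltW e0).
have me : 0 <= m%:R * eps by rewrite mulr_ge0 // ltW.
rewrite [X in _ <= _ ^+ X]mulnC exprM.
apply: (@le_trans _ _ ((m%:R * eps) ^+ 2)); last first.
  apply: lerXn2r; rewrite ?nnegrE ?exprn_ge0 //; last by lra.
  by rewrite addr_ge0 // ltW.
have -> : (2 * m).+1%:R = 2 * m%:R + 1 :> Rdefinitions.R by rewrite -natr1 natrM.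
have hb0 : 0 <= (m%:R - 1) * beta by rewrite mulr_ge0 //; lra.
have : m%:R * (3 * beta) <= m%:R * (m%:R * eps ^+ 2) by rewrite ler_pM2l ?ltW //; lra.
rewrite expr2 in hm *; nra.
Qed.

Lemma help_fin (M eps del r g : Rdefinitions.R) : 1 <= M -> 0 < eps -> eps * (M + 4) <= del ->
  eps <= 1 -> 0 <= r -> r <= 1 + eps -> 0 <= g -> g <= M + 2 * eps -> r * g <= M + del.
Proof.
move=> M1 e0 e2 e1 r0 r1 g0 gM.
apply: (@le_trans _ _ ((1 + eps) * (M + 2 * eps))).
  by apply: ler_pM.
nra.
Qed.

Theorem proposition3p13 (A1 A2 : fusion_data) :
  is_fusion_algebra A1 -> is_fusion_algebra A2 ->
  finitely_generated A1 -> finitely_generated A2 ->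
  omega (product_fusion A1 A2) = Num.max (omega A1) (omega A2).
Proof.
move=> h1 h2 fg1 fg2.
have w1 := fusion_WF h1; have w2 := fusion_WF h2; have wP := prod_WF w1 w2.
have [X1 gX1] := fg1; have [X2 gX2] := fg2.
have gP : is_gen_set (Xprod X1 X2) := gen_prod w1 w2 h1 h2 gX1 gX2.
have lower : Num.max (omega A1) (omega A2) <= omega (product_fusion A1 A2).
  apply: lb_le_inf; first by exists (omega_X (Xprod X1 X2)), (Xprod X1 X2).
  move=> _ [X gX <-]; have fX : finite_set X by case: gX.
  rewrite ge_max; apply/andP; split.
  - apply: le_trans (omega_le w1 (gen_fst w1 w2 gX)) _.
    have fX1 : finite_set (fst @` X) by apply: finite_image.
    rewrite (omegaX_eq w1 fX1) (omegaX_eq wP fX).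
    apply: fekL_mono; first by move=> n; apply: dmass_ball_ge1.
    by move=> n; apply: dmass_fst.
  - apply: le_trans (omega_le w2 (gen_snd w1 w2 gX)) _.
    have fX2 : finite_set (snd @` X) by apply: finite_image.
    rewrite (omegaX_eq w2 fX2) (omegaX_eq wP fX).
    apply: fekL_mono; first by move=> n; apply: dmass_ball_ge1.
    by move=> n; apply: dmass_snd.
set M := Num.max (omega A1) (omega A2).
have M1 : 1 <= M by rewrite le_max (omega_ge1 w1 fg1).
apply/eqP; rewrite eq_le lower andbT.
apply/ler_addgt0Pr => del d0.
pose eps := Num.min 1 (del / (M + 4)).
have e0 : 0 < eps by rewrite lt_min ltr01 divr_gt0 //; lra.
have e1 : eps <= 1 by rewrite ge_min lexx.
have e2 : eps * (M + 4) <= del.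
  by rewrite -ler_pdivlMr ?ge_min ?lexx ?orbT //; lra.
have [Y1 [gY1 HY1]] := omega_approx fg1 e0.
have [Y2 [gY2 HY2]] := omega_approx fg2 e0.
have fY1 : finite_set Y1 by case: gY1.
have fY2 : finite_set Y2 by case: gY2.
rewrite (omegaX_eq w1 fY1) in HY1; rewrite (omegaX_eq w2 fY2) in HY2.
pose b1 := fun n => dmass (Defs.ball Y1 n).
pose b2 := fun n => dmass (Defs.ball Y2 n).
have b1_1 n : 1 <= b1 n by apply: dmass_ball_ge1.
have b2_1 n : 1 <= b2 n by apply: dmass_ball_ge1.
have b1_s n m : b1 (n + m)%N <= b1 n * b1 m by apply: dmass_ball_submul.
have b2_s n m : b2 (n + m)%N <= b2 n * b2 m by apply: dmass_ball_submul.
have b1_m n m : (n <= m)%N -> b1 n <= b1 m by move=> ?; apply: dmass_ball_mono.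
have b2_m n m : (n <= m)%N -> b2 n <= b2 m by move=> ?; apply: dmass_ball_mono.
have [K1 [K10 HK1]] := L_approx b1 e0.
have [K2 [K20 HK2]] := L_approx b2 e0.
set g1 := b1 K1 `^ K1%:R^-1 in HK1.
set g2 := b2 K2 `^ K2%:R^-1 in HK2.
have g11 : 1 <= g1 := u_ge1 b1_1 K1.
have g21 : 1 <= g2 := u_ge1 b2_1 K2.
have bd1 j : b1 j <= b1 K1 * g1 ^+ j := bound_geo b1_1 b1_s b1_m j K10.
have bd2 j : b2 j <= b2 K2 * g2 ^+ j := bound_geo b2_1 b2_s b2_m j K20.
pose g := Num.max g1 g2.
have g1g : g1 <= g by rewrite le_max lexx.
have g2g : g2 <= g by rewrite le_max lexx orbT.
have gM : g <= M + 2 * eps.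
  have o1 : omega A1 <= M by rewrite le_max lexx.
  have o2 : omega A2 <= M by rewrite le_max lexx orbT.
  rewrite ge_max; apply/andP; split; lra.
have g0 : 0 <= g by lra.
pose beta := b1 K1 * b2 K2.
have beta1 : 1 <= beta by rewrite -[1]mulr1; apply: ler_pM.
pose Y := Xprod Y1 Y2.
have gY : is_gen_set Y := gen_prod w1 w2 h1 h2 gY1 gY2.
have fY : finite_set Y by case: gY.
apply: le_trans (omega_le wP gY) _.
rewrite (omegaX_eq wP fY).
pose m := (Num.truncn (3 * beta / eps ^+ 2)).+1.
have hm : 3 * beta < m%:R * eps ^+ 2.
  by rewrite -ltr_pdivrMr ?exprn_gt0 //; apply: truncnS_gt.
have m1 : 1 <= m%:R :> Rdefinitions.R by rewrite ler1n.
pose n := (2 * m)%N.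
have n0 : (0 < n)%N by rewrite muln_gt0.
apply: le_trans (L_le (fun k => dmass_ball_ge1 wP k fY) n0) _.
have bP : dmass (Defs.ball Y n) <= (n.+1%:R * beta) * g ^+ n.
  apply: le_trans (dmass_ball_prod w1 w2 n fY1 fY2) _.
  apply: (@le_trans _ _ (\sum_(k <- iota 0 n.+1) beta * g ^+ n)).
    rewrite big_seq [leRHS]big_seq; apply: ler_sum => k; rewrite mem_iota add0n ltnS => kn.
    apply: (@le_trans _ _ ((b1 K1 * g1 ^+ k) * (b2 K2 * g2 ^+ (n - k)))).
      apply: ler_pM; rewrite ?dmass_ge0 //; [exact: bd1|exact: bd2].
    rewrite /beta mulrACA; apply: ler_wpM2l; first by apply: mulr_ge0; apply: le_trans ler01 _.
    have g10 : 0 <= g1 by apply: le_trans ler01 g11.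
    have g20 : 0 <= g2 by apply: le_trans ler01 g21.
    rewrite -[X in g ^+ X](subnKC kn) exprD.
    apply: ler_pM; rewrite ?exprn_ge0 //.
      by apply: lerXn2r; rewrite ?nnegrE.
    by apply: lerXn2r; rewrite ?nnegrE.
  have -> : iota 0 n.+1 = index_iota 0 n.+1 by rewrite /index_iota subn0.
  by rewrite sumr_const_nat subn0 -mulrA mulr_natl.
have c0 : 0 <= n.+1%:R * beta by apply: mulr_ge0 => //; apply: le_trans ler01 beta1.
apply: (@le_trans _ _ (((n.+1%:R * beta) * g ^+ n) `^ n%:R^-1)).
  apply: ge0_ler_powR; rewrite ?invr_ge0 ?nnegrE ?dmass_ge0 //.
  by rewrite mulr_ge0 // exprn_ge0.
rewrite root_mul //.
have big : n.+1%:R * beta <= (1 + eps) ^+ n by apply: help_big.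
have r1 := root_small' c0 e0 n0 big.
apply: help_fin; [exact: M1|exact: e0|exact: e2|exact: e1|exact: powR_ge0|exact: r1|exact: g0|exact: gM].
Qed.
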